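(* Let $v,w,X,Y\in\mathbb{R}^d$ with $\|X\|<\|v\|$ and $\|Y\|<\|w\|$, and define $$h(v,w,X,Y):=-\frac{\|X\|\|Y\|}{\|v\|\|w\|}+\sqrt{1-\frac{\|X\|^2}{\|v\|^2}}\sqrt{1-\frac{\|Y\|^2}{\|w\|^2}}.$$ If $\alpha(v,w)\leq h(v,w,X,Y)$, then $$\alpha(v+X,w+Y)\leq \alpha(v,w)\,h(v,w,X,Y)+\sqrt{1-\alpha(v,w)^2}\sqrt{1-h(v,w,X,Y)^2}.$$
   Context: For nonzero $a,b\in\mathbb{R}^d$, the cosine similarity is $\alpha(a,b)=\frac{\langle a,b\rangle}{\|a\|\|b\|}$. *)

(* Defs.v *)
From mathcomp Require Import all_boot all_order all_algebra.
Set Implicit Arguments. Unset Strict Implicit. Unset Printing Implicit Defensive.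
Import Order.TTheory GRing.Theory Num.Theory.
Local Open Scope ring_scope.

Definition inner (R : rcfType) (d : nat) (a b : 'rV[R]_d) : R :=
  \sum_(i < d) a 0 i * b 0 i.

Definition enorm (R : rcfType) (d : nat) (a : 'rV[R]_d) : R :=
  Num.sqrt (inner a a).

(* cosine similarity alpha(a,b) = <a,b> / (|a| |b|)  (meaningful for a, b nonzero) *)
Definition cossim (R : rcfType) (d : nat) (a b : 'rV[R]_d) : R :=
  inner a b / (enorm a * enorm b).

Definition hfun (R : rcfType) (d : nat) (v w X Y : 'rV[R]_d) : R :=
  - (enorm X * enorm Y) / (enorm v * enorm w)
  + Num.sqrt (1 - enorm X ^+ 2 / enorm v ^+ 2)
    * Num.sqrt (1 - enorm Y ^+ 2 / enorm w ^+ 2).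

(* Main.v *)
Require Import Defs.
From mathcomp Require Import all_boot all_order all_algebra.
From mathcomp Require Import ring lra.
Import Order.TTheory GRing.Theory Num.Theory.
Local Open Scope ring_scope.
Set Implicit Arguments. Unset Strict Implicit.

Lemma innerC (R : rcfType) (d : nat) (a b : 'rV[R]_d) : inner a b = inner b a.
Proof. by rewrite /inner; apply: eq_bigr => i _; rewrite mulrC. Qed.

Lemma innerDl (R : rcfType) (d : nat) (a b c : 'rV[R]_d) :
  inner (a + b) c = inner a c + inner b c.
Proof. by rewrite /inner -big_split; apply: eq_bigr => i _; rewrite mxE mulrDl. Qed.

Lemma innerZl (R : rcfType) (d : nat) (r : R) (a c : 'rV[R]_d) :
  inner (r *: a) c = r * inner a c.
Proof. by rewrite /inner mulr_sumr; apply: eq_bigr => i _; rewrite mxE mulrA. Qed.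

Lemma innerNl (R : rcfType) (d : nat) (a c : 'rV[R]_d) :
  inner (- a) c = - inner a c.
Proof. by rewrite -scaleN1r innerZl mulN1r. Qed.

Lemma innerDr (R : rcfType) (d : nat) (a b c : 'rV[R]_d) :
  inner c (a + b) = inner c a + inner c b.
Proof. by rewrite innerC innerDl !(innerC c). Qed.

Lemma innerZr (R : rcfType) (d : nat) (r : R) (a c : 'rV[R]_d) :
  inner c (r *: a) = r * inner c a.
Proof. by rewrite innerC innerZl innerC. Qed.

Lemma innerNr (R : rcfType) (d : nat) (a c : 'rV[R]_d) :
  inner c (- a) = - inner c a.
Proof. by rewrite innerC innerNl innerC. Qed.

Lemma inner_ge0 (R : rcfType) (d : nat) (a : 'rV[R]_d) : 0 <= inner a a.
Proof. by rewrite /inner sumr_ge0 // => i _; nra. Qed.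

Lemma inner0 (R : rcfType) (d : nat) (a b : 'rV[R]_d) : inner a a = 0 -> inner a b = 0.
Proof.
move=> /eqP; rewrite /inner psumr_eq0; last by move=> i _; nra.
move=> /allP H; rewrite big1 // => i _.
have /H : i \in index_enum 'I_d by rewrite mem_index_enum.
by rewrite /= mulf_eq0 orbb => /eqP ->; rewrite mul0r.
Qed.

Lemma CS2 (R : rcfType) (d : nat) (a b : 'rV[R]_d) :
  inner a b ^+ 2 <= inner a a * inner b b.
Proof.
have [A0|Apos] := eqVneq (inner a a) 0.
  by rewrite (inner0 b A0) A0 expr0n mul0r.
have Ag : 0 < inner a a by rewrite lt_def Apos inner_ge0.
have H := inner_ge0 (inner a a *: b - inner a b *: a).
rewrite !(innerDl, innerDr, innerNl, innerNr, innerZl, innerZr) (innerC b a) in H.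
have : 0 <= inner a a * (inner a a * inner b b - inner a b ^+ 2) by lra.
rewrite pmulr_rge0 //; lra.
Qed.
Lemma le_sqrtM (R : rcfType) (t A B : R) : 0 <= A -> t ^+ 2 <= A * B ->
  t <= Num.sqrt A * Num.sqrt B.
Proof.
move=> A0 H; rewrite -sqrtrM //.
apply: (le_trans (ler_norm t)); rewrite -sqrtr_sqr.
by rewrite ler_sqrt // (le_trans _ H) // sqr_ge0.
Qed.

Lemma ssq (R : rcfType) (k : R) : -1 <= k <= 1 ->
  0 <= Num.sqrt (1 - k ^+ 2) /\ Num.sqrt (1 - k ^+ 2) ^+ 2 = 1 - k ^+ 2.
Proof. move=> /andP[h1 h2]; split; first exact: sqrtr_ge0.
by rewrite sqr_sqrtr //; nra. Qed.

Lemma sinlem (R : rcfType) (k m sk sm : R) : -1 <= k -> k <= m -> m <= 1 ->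
  0 <= sk -> sk ^+ 2 = 1 - k ^+ 2 -> 0 <= sm -> sm ^+ 2 = 1 - m ^+ 2 ->
  0 <= m * sk - sm * k.
Proof.
move=> h1 h2 h3 h4 h5 h6 h7.
have [k0|k0] := lerP 0 k; have [m0|m0] := lerP 0 m.
- have : sm <= sk by rewrite -(ler_pXn2r (n:=2)) ?nnegrE //; nra.
  nra.
- lra.
- nra.
- have : sk <= sm by rewrite -(ler_pXn2r (n:=2)) ?nnegrE //; nra.
  nra.
Qed.

Lemma mono1 (R : rcfType) (k k' m sk sk' sm : R) : -1 <= k -> k <= k' -> k' <= m -> m <= 1 ->
  0 <= sk -> sk ^+ 2 = 1 - k ^+ 2 -> 0 <= sk' -> sk' ^+ 2 = 1 - k' ^+ 2 ->
  0 <= sm -> sm ^+ 2 = 1 - m ^+ 2 ->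
  k * m + sk * sm <= k' * m + sk' * sm.
Proof.
move=> h1 h2 h3 h4 h5 h6 h7 h8 h9 h10.
have A := sinlem h1 (le_trans h2 h3) h4 h5 h6 h9 h10.
have B := sinlem (le_trans h1 h2) h3 h4 h7 h8 h9 h10.
have E : (sk + sk') * (k' * m + sk' * sm - (k * m + sk * sm)) =
   (k' - k) * ((m * sk - sm * k) + (m * sk' - sm * k')).
  have -> : (sk + sk') * (k' * m + sk' * sm - (k * m + sk * sm)) =
     (sk + sk') * (k' - k) * m + sm * (sk' ^+ 2 - sk ^+ 2) by ring.
  rewrite h6 h8; ring.
have [s0|s0] := eqVneq (sk + sk') 0.
  have z1 : sk = 0 by lra.
  have z2 : sk' = 0 by lra.
  rewrite z1 z2 in h6 h8.
  nra.
have sp : 0 < sk + sk' by rewrite lt_def s0 /=; lra.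
have : 0 <= (sk + sk') * (k' * m + sk' * sm - (k * m + sk * sm)) by rewrite E; nra.
rewrite pmulr_rge0 //; lra.
Qed.

Lemma mono2 (R : rcfType) (k m m' sk sm sm' : R) : -1 <= k -> k <= m -> m <= m' -> m' <= 1 ->
  0 <= sk -> sk ^+ 2 = 1 - k ^+ 2 -> 0 <= sm -> sm ^+ 2 = 1 - m ^+ 2 ->
  0 <= sm' -> sm' ^+ 2 = 1 - m' ^+ 2 ->
  k * m' + sk * sm' <= k * m + sk * sm.
Proof.
move=> h1 h2 h3 h4 h5 h6 h7 h8 h9 h10.
have A := sinlem h1 h2 (le_trans h3 h4) h5 h6 h7 h8.
have B := sinlem h1 (le_trans h2 h3) h4 h5 h6 h9 h10.
have E : (sm + sm') * (k * m + sk * sm - (k * m' + sk * sm')) =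
   (m' - m) * ((m * sk - sm * k) + (m' * sk - sm' * k)).
  have -> : (sm + sm') * (k * m + sk * sm - (k * m' + sk * sm')) =
     (sm + sm') * (m - m') * k + sk * (sm ^+ 2 - sm' ^+ 2) by ring.
  rewrite h8 h10; ring.
have [s0|s0] := eqVneq (sm + sm') 0.
  have z1 : sm = 0 by lra.
  have z2 : sm' = 0 by lra.
  rewrite z1 z2 in h8 h10.
  nra.
have sp : 0 < sm + sm' by rewrite lt_def s0 /=; lra.
have : 0 <= (sm + sm') * (k * m + sk * sm - (k * m' + sk * sm')) by rewrite E; nra.
rewrite pmulr_rge0 //; lra.
Qed.

Lemma enorm_sq (R : rcfType) (d : nat) (a : 'rV[R]_d) : enorm a ^+ 2 = inner a a.
Proof. by rewrite /enorm sqr_sqrtr // inner_ge0. Qed.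

Lemma enorm_ge0 (R : rcfType) (d : nat) (a : 'rV[R]_d) : 0 <= enorm a.
Proof. exact: sqrtr_ge0. Qed.

Lemma CS1 (R : rcfType) (d : nat) (a b : 'rV[R]_d) : inner a b <= enorm a * enorm b.
Proof. by apply: le_sqrtM; [exact: inner_ge0 | exact: CS2]. Qed.

Lemma inner_eq (R : rcfType) (d : nat) (a b : 'rV[R]_d) : 0 < enorm a -> 0 < enorm b ->
  inner a b = cossim a b * (enorm a * enorm b).
Proof. move=> ha hb; rewrite /cossim mulfVK //; apply/lt0r_neq0; exact: mulr_gt0. Qed.

Lemma cossim_bound (R : rcfType) (d : nat) (a b : 'rV[R]_d) : 0 < enorm a -> 0 < enorm b ->
  -1 <= cossim a b <= 1.
Proof.
move=> ha hb.
have h1 := CS1 a b; have h2 := CS1 (- a) b.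
rewrite innerNl (inner_eq ha hb) in h1 h2.
have e : enorm (- a) = enorm a by rewrite /enorm innerNl innerNr opprK.
rewrite e in h2.
have p : 0 < enorm a * enorm b by exact: mulr_gt0.
apply/andP; split; nra.
Qed.

Lemma rev_tri (R : rcfType) (d : nat) (x y z : 'rV[R]_d) :
  0 < enorm x -> 0 < enorm y -> 0 < enorm z ->
  cossim z y <= cossim x y * cossim x z
     + Num.sqrt (1 - cossim x y ^+ 2) * Num.sqrt (1 - cossim x z ^+ 2).
Proof.
move=> hx hy hz.
have H := CS2 (inner x x *: y - inner x y *: x) (inner x x *: z - inner x z *: x).
rewrite !(innerDl, innerDr, innerNl, innerNr, innerZl, innerZr) in H.
rewrite (innerC y x) (innerC z x) in H.
idtac.
rewrite -!enorm_sq in H.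
rewrite (inner_eq hx hy) (inner_eq hx hz) (inner_eq hy hz) in H.
have [cb1 cb2] := (cossim_bound hx hy, cossim_bound hx hz).
have cb3 := cossim_bound hy hz.

set nx := enorm x in H hx; set ny := enorm y in H hy; set nz := enorm z in H hz.
set a := cossim x y in H cb1 *; set b := cossim x z in H cb2 *.
have -> : cossim z y = cossim y z by rewrite /cossim (innerC z y) (mulrC (enorm z)).
set g := cossim y z in H cb3 *.
suff : g - a * b <= Num.sqrt (1 - a ^+ 2) * Num.sqrt (1 - b ^+ 2) by lra.
apply: le_sqrtM; first by nra.
have P : 0 < (nx ^+ 4 * ny * nz) ^+ 2 by apply: exprn_gt0; apply: mulr_gt0; [apply: mulr_gt0|]; [apply: exprn_gt0| |].
have E1 : forall L M, L = (nx ^+ 4 * ny * nz) ^+ 2 * (g - a * b) ^+ 2 ->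
   M = (nx ^+ 4 * ny * nz) ^+ 2 * ((1 - a ^+ 2) * (1 - b ^+ 2)) -> L <= M ->
   (g - a * b) ^+ 2 <= (1 - a ^+ 2) * (1 - b ^+ 2).
  by move=> L M -> ->; rewrite ler_pM2l.
apply: (E1 _ _ _ _ H); ring.
Qed.

Lemma pert (R : rcfType) (d : nat) (v X : 'rV[R]_d) : enorm X < enorm v ->
  0 < enorm (v + X) /\ Num.sqrt (1 - enorm X ^+ 2 / enorm v ^+ 2) <= cossim v (v + X).
Proof.
move=> hX.
have x0 := enorm_ge0 X.
have hv : 0 < enorm v by lra.
have c1 := CS1 v X; have c2 := CS1 v (- X).
have eN : enorm (- X) = enorm X by rewrite /enorm innerNl innerNr opprK.
rewrite eN innerNr in c2.
have eP : enorm (v + X) ^+ 2 = enorm v ^+ 2 + 2 * inner v X + enorm X ^+ 2.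
  rewrite !enorm_sq !(innerDl, innerDr) (innerC X v); ring.
have eI : inner v (v + X) = enorm v ^+ 2 + inner v X by rewrite innerDr enorm_sq.
set V := enorm v in hv hX eP eI c1 c2 *; set x := enorm X in x0 hX eP c1 c2 *.
set t := inner v X in eP eI c1 c2 *.
have P0 := enorm_ge0 (v + X).
set P := enorm (v + X) in eP P0 *.
have Pp : 0 < P.
  rewrite lt_def P0 andbT; apply/eqP => P00; rewrite P00 in eP.
  have : 0 < (V - x) ^+ 2 by rewrite exprn_gt0 //; lra.
  nra.
split=> //.
have := inner_eq hv Pp; rewrite eI; set c := cossim v (v + X) => ec.
have VP : 0 < V * P by exact: mulr_gt0.
have Vt : 0 < V ^+ 2 + t by nra.
have c0 : 0 <= c.
  rewrite ec in Vt; rewrite le_eqVlt; apply/orP; right; move: Vt; rewrite pmulr_lgt0 //.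

rewrite -(ger0_norm c0) -sqrtr_sqr ler_sqrt ?sqr_ge0 //.
set r := x / V.
have xr : x = r * V by rewrite /r mulfVK // lt0r_neq0.
have -> : x ^+ 2 / V ^+ 2 = r ^+ 2 by rewrite /r expr_div_n.
rewrite xr in eP c1 c2 hX.
have H : (V * P) ^+ 2 * (1 - r ^+ 2) <= (V * P) ^+ 2 * c ^+ 2.
  have -> : (V * P) ^+ 2 * c ^+ 2 = (V ^+ 2 + t) ^+ 2 by rewrite ec -/V -/P; ring.
  have -> : (V * P) ^+ 2 * (1 - r ^+ 2) = V ^+ 2 * P ^+ 2 * (1 - r ^+ 2) by ring.
  rewrite eP -subr_ge0.
  have -> : (V ^+ 2 + t) ^+ 2 - V ^+ 2 * (V ^+ 2 + 2 * t + (r * V) ^+ 2) * (1 - r ^+ 2)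
     = (t + r ^+ 2 * V ^+ 2) ^+ 2 by ring.
  exact: sqr_ge0.
by rewrite ler_pM2l ?exprn_gt0 in H.
Qed.

Lemma cossimC (R : rcfType) (d : nat) (a b : 'rV[R]_d) : cossim a b = cossim b a.
Proof. by rewrite /cossim (innerC a b) (mulrC (enorm a)). Qed.

Lemma sdata (R : rcfType) (x V : R) : 0 <= x -> x < V ->
  let s := x / V in let c := Num.sqrt (1 - x ^+ 2 / V ^+ 2) in
  [/\ 0 <= s, s < 1, 0 <= c, c <= 1 & c ^+ 2 = 1 - s ^+ 2].
Proof.
move=> x0 xV s c.
have V0 : 0 < V by lra.
have e : x ^+ 2 / V ^+ 2 = s ^+ 2 by rewrite /s expr_div_n.
have s0 : 0 <= s by rewrite /s divr_ge0 // ltW.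
have s1 : s < 1 by rewrite /s ltr_pdivrMr // mul1r.
have c2 : c ^+ 2 = 1 - s ^+ 2 by rewrite /c e sqr_sqrtr //; nra.
have c0 : 0 <= c by exact: sqrtr_ge0.
split => //; nra.
Qed.

Unset Implicit Arguments.

Theorem lemma2 (R : rcfType) (d : nat) (v w X Y : 'rV[R]_d)
  (hX : enorm X < enorm v) (hY : enorm Y < enorm w)
  (hle : cossim v w <= hfun v w X Y) :
  cossim (v + X) (w + Y) <=
    cossim v w * hfun v w X Y
    + Num.sqrt (1 - cossim v w ^+ 2) * Num.sqrt (1 - hfun v w X Y ^+ 2).
Proof.
have [Pp e1ge] := pert hX.
have [Qp e2ge] := pert hY.
have hv : 0 < enorm v by have := enorm_ge0 X; lra.
have hw : 0 < enorm w by have := enorm_ge0 Y; lra.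
have [s1ge0 s1lt1 c1ge0 c1le1 c1sq] := sdata (enorm_ge0 X) hX.
have [s2ge0 s2lt1 c2ge0 c2le1 c2sq] := sdata (enorm_ge0 Y) hY.
have eh : hfun v w X Y = Num.sqrt (1 - enorm X ^+ 2 / enorm v ^+ 2) *
     Num.sqrt (1 - enorm Y ^+ 2 / enorm w ^+ 2) - (enorm X / enorm v) * (enorm Y / enorm w).
  rewrite /hfun; field; apply/andP; split; exact: lt0r_neq0.
rewrite eh in hle *.
move: e1ge e2ge hle c1ge0 c1le1 c1sq c2ge0 c2le1 c2sq.
set c1 := Num.sqrt (1 - enorm X ^+ 2 / enorm v ^+ 2).
set c2 := Num.sqrt (1 - enorm Y ^+ 2 / enorm w ^+ 2).
set s1 := enorm X / enorm v.
set s2 := enorm Y / enorm w.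
move=> e1ge e2ge hle c1ge0 c1le1 c1sq c2ge0 c2le1 c2sq.
set p := v + X in Pp e1ge *; set q := w + Y in Qp e2ge *.
move: s1ge0 s1lt1 s2ge0 s2lt1; rewrite -/s1 -/s2 => s1ge0 s1lt1 s2ge0 s2lt1.
have s1le1 : s1 <= 1 by exact: ltW.
have s2le1 : s2 <= 1 by exact: ltW.
set h := c1 * c2 - s1 * s2 in hle *.
set sh := s1 * c2 + c1 * s2.
have sh0 : 0 <= sh by rewrite /sh addr_ge0 // mulr_ge0.
have shsq : sh ^+ 2 = 1 - h ^+ 2.
  have -> : 1 - h ^+ 2 = (c1 ^+ 2 + s1 ^+ 2) * (c2 ^+ 2 + s2 ^+ 2) - h ^+ 2 by rewrite c1sq c2sq; ring.
  rewrite /sh /h; ring.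
have -> : Num.sqrt (1 - h ^+ 2) = sh by rewrite -shsq sqrtr_sqr ger0_norm.
have /andP[cf1 cf2] := cossim_bound hv hw.
have [sf0 sfsq] := ssq (cossim_bound hv hw).
set cf := cossim v w in hle cf1 cf2 sfsq *.
set sf := Num.sqrt (1 - cf ^+ 2) in sf0 sfsq *.
have hc1 : h <= c1 by rewrite /h; nra.
have s1sq : s1 ^+ 2 = 1 - c1 ^+ 2 by rewrite c1sq; ring.
have s2sq : s2 ^+ 2 = 1 - c2 ^+ 2 by rewrite c2sq; ring.
have A1 := rev_tri hv hw Pp.
rewrite -/cf -/sf in A1.
have /andP[e1a e1b] := cossim_bound hv Pp.
have [se10 se1sq] := ssq (cossim_bound hv Pp).
have A2 := mono2 cf1 (le_trans hle hc1) e1ge e1b sf0 sfsq s1ge0 s1sq se10 se1sq.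
set c' := cf * c1 + sf * s1 in A2.
have hA : cossim p w <= c' by lra.
have hh1 : -1 <= h by lra.
have M := mono1 cf1 hle hc1 c1le1 sf0 sfsq sh0 shsq s1ge0 s1sq.
have ec2 : h * c1 + sh * s1 = c2.
  have -> : h * c1 + sh * s1 = c2 * (c1 ^+ 2 + s1 ^+ 2) by rewrite /h /sh; ring.
  by rewrite c1sq subrK mulr1.
rewrite ec2 in M.
set sc := sf * c1 - cf * s1.
have sc0 : 0 <= sc by rewrite /sc mulrC (mulrC cf); exact: (sinlem cf1 (le_trans hle hc1) c1le1 sf0 sfsq s1ge0 s1sq).
have scsq : sc ^+ 2 = 1 - c' ^+ 2.
  have -> : 1 - c' ^+ 2 = (cf ^+ 2 + sf ^+ 2) * (c1 ^+ 2 + s1 ^+ 2) - c' ^+ 2 by rewrite sfsq c1sq; ring.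
  rewrite /sc /c'; ring.
have B1 := rev_tri hw Pp Qp.
have /andP[ka kb] := cossim_bound hw Pp.
have [sk0 sksq] := ssq (cossim_bound hw Pp).
have /andP[e2a e2b] := cossim_bound hw Qp.
have [se20 se2sq] := ssq (cossim_bound hw Qp).
have kc : cossim w p <= c' by rewrite cossimC.
have c'1 : -1 <= c' by lra.
have B2 := mono1 ka kc (le_trans M e2ge) e2b sk0 sksq sc0 scsq se20 se2sq.
have B3 := mono2 c'1 M e2ge e2b sc0 scsq s2ge0 s2sq se20 se2sq.
have E : c' * c2 + sc * s2 = cf * h + sf * sh by rewrite /c' /sc /h /sh; ring.
rewrite cossimC -E; lra.
Qed.
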